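(* Let $n\ge 2$ and $1\le \ell\le n-1$. Let $\mathbf{x}=(x_1,\dots,x_n)$ satisfy $x_1\le\dots\le x_\ell<0\le x_{\ell+1}\le\dots\le x_n$, and let $M=\mathbf{x}^T\mathbf{x}$, with pairwise distinct off-diagonal entries. Then for all $t\in[0,1]$, $\beta_1(t)\le(\ell-1)(n-\ell-1)$, with equality when $G_t(M)$ is the complete bipartite graph $K_{\ell,n-\ell}$ (with parts $\{1,\dots,\ell\}$ and $\{\ell+1,\dots,n\}$). Moreover $\beta_k(t)=0$ for all $k>1$ and all $t\in[0,1]$.
   Context: Betti curves of a symmetric matrix. Let $M$ be a real symmetric $n\times n$ matrix whose $\binom{n}{2}$ off-diagonal entries $M_{ij}$ ($i<j$) are pairwise distinct. The ordering matrix $\widehat{M}$ is defined by $\widehat{M}_{ij}=k$ if $M_{ij}$ is the $k$-th smallest off-diagonal entry. For $t\in[0,1]$, $G_t=G_t(M)$ is the graph on vertex set $\{1,\dots,n\}$ with edge set $\{\{i,j\} : \widehat{M}_{ij}\le t\binom{n}{2}\}$ (so edges are added in increasing order of the entries $M_{ij}$; $G_0$ has no edges and $G_1$ is complete). $X(G_t)$ is the clique complex of $G_t$ (every $k$-clique of $G_t$ is filled in by a $(k-1)$-dimensional simplex). The $i$-th Betti curve of $M$ is $\beta_i(t)=\operatorname{rank} H_i(X(G_t);\mathbf{k})$, with $H_i$ simplicial homology with coefficients in a fixed field $\mathbf{k}$. Here $\mathbf{x}$ is a row vector, so $\mathbf{x}^T\mathbf{x}$ is the $n\times n$ matrix with entries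 $x_ix_j$. *)

(* Defs.v *)
From HB Require Import structures.
From mathcomp Require Import all_boot all_order all_algebra.
Set Implicit Arguments. Unset Strict Implicit. Unset Printing Implicit Defensive.
Import Order.TTheory GRing.Theory Num.Theory.
Local Open Scope ring_scope.

Section Graph.
Variable R : realFieldType.
Variable n : nat.

(* When entries are
   pairwise distinct this is the k with M i j the k-th smallest. *)
Definition entry_rank (M : 'M[R]_n) (i j : 'I_n) : nat :=
  (#|[set p : 'I_n * 'I_n | (p.1 < p.2)%N && (M p.1 p.2 < M i j)]|).+1.

Definition Gt (M : 'M[R]_n) (t : R) : rel 'I_n :=
  fun i j => (i != j) && ((entry_rank M i j)%:R <= t * ('C(n, 2))%:R).
End Graph.

Section Clique.
Variable F : fieldType.
Variable n : nat.
Variable e : rel 'I_n.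

Definition is_simplex (S : {set 'I_n}) : bool :=
  (S != set0) && [forall u in S, forall v in S, (u != v) ==> e u v].

Definition is_ksimplex (k : nat) (S : {set 'I_n}) : bool :=
  is_simplex S && (#|S| == k.+1).

Definition N := #|{set 'I_n}|.

(* Boundary map d_k : C_k -> C_{k-1}, acting on row vectors indexed by all
   subsets of vertices (via enum_val); rows of non-k-simplices are zero.
   d [v_0 < ... < v_k] = sum_i (-1)^i [.. ^v_i ..]; d_0 = 0 (unreduced). *)
Definition boundary (k : nat) : 'M[F]_N :=
  \matrix_(a < N, b < N)
    let S := enum_val a in let T := enum_val b in
    if is_ksimplex k S && is_simplex T then
      \sum_(v in S | T == S :\ v) (-1) ^+ #|[set u in S | (u < v)%N]|
    else 0.

(* The chain space C_k as the row space spanned by the k-simplices. *)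
Definition chains (k : nat) : 'M[F]_N :=
  diag_mx (\row_(a < N) (is_ksimplex k (enum_val a))%:R).

Definition cycles (k : nat) : 'M[F]_N := (chains k :&: kermx (boundary k))%MS.
Definition boundaries (k : nat) : 'M[F]_N := (chains k.+1 *m boundary k.+1)%MS.

Definition betti (k : nat) : nat := (\rank (cycles k) - \rank (boundaries k))%N.
End Clique.

(* Main.v *)
Require Import Defs.
From HB Require Import structures.
From mathcomp Require Import all_boot all_order all_algebra.
From mathcomp Require Import ring lra zify.
Set Implicit Arguments. Unset Strict Implicit. Unset Printing Implicit Defensive.
Import Order.TTheory GRing.Theory Num.Theory.
Local Open Scope ring_scope.


Section Hom.
Variable F : fieldType.
Variable n : nat.
Variable e : rel 'I_n.

Local Notation NN := (N n).
Local Notation simp := (is_simplex e).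
Local Notation ksimp := (is_ksimplex e).
Local Notation bd := (boundary F e).
Local Notation ch := (chains F e).

Definition rk (S : {set 'I_n}) : 'I_NN := enum_rank S.
Definition sv (a : 'I_NN) : {set 'I_n} := enum_val a.
Lemma rkK S : sv (rk S) = S. Proof. exact: enum_rankK. Qed.
Lemma svK a : rk (sv a) = a. Proof. exact: enum_valK. Qed.
Lemma sv_inj : injective sv. Proof. exact: can_inj svK. Qed.
Lemma rk_inj : injective rk. Proof. exact: can_inj rkK. Qed.

Definition sg (S : {set 'I_n}) (v : 'I_n) : F := (-1) ^+ #|[set u in S | (u < v)%N]|.

Lemma sg_sq S v : sg S v * sg S v = 1.
Proof. by rewrite /sg -exprMn mulrNN mulr1 expr1n. Qed.

Lemma sg_neq0 S v : sg S v != 0.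
Proof. by apply/eqP=> h; have := sg_sq S v; rewrite h mul0r => /eqP; rewrite eq_sym oner_eq0. Qed.

Lemma bdE k a b : bd k a b =
  if ksimp k (sv a) && simp (sv b) then
    \sum_(v in sv a | sv b == sv a :\ v) sg (sv a) v else 0.
Proof. by rewrite mxE. Qed.

Lemma simplex_sub (S T : {set 'I_n}) : simp S -> T \subset S -> T != set0 -> simp T.
Proof.
move=> /andP[_ /forall_inP H] sub ne; apply/andP; split=> //.
apply/forall_inP => u uT; apply/forall_inP => w wT.
exact: (forall_inP (H u (subsetP sub u uT)) w (subsetP sub w wT)).
Qed.

Lemma ksimp_card k S : ksimp k S -> #|S| = k.+1.
Proof. by case/andP=> _ /eqP. Qed.

Lemma ksimp_simp k S : ksimp k S -> simp S.
Proof. by case/andP. Qed.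

Lemma face_simp k S v : ksimp k.+1 S -> simp (S :\ v).
Proof.
move=> H; apply: (simplex_sub (ksimp_simp H)); first exact: subD1set.
apply/eqP=> h; have := cardsD1 v S; rewrite h cards0 (ksimp_card H) addn0.
by case: (v \in S).
Qed.

Lemma ksimp_face k S v : ksimp k.+1 S -> v \in S -> ksimp k (S :\ v).
Proof.
move=> H vS; rewrite /is_ksimplex (face_simp v H) /=.
by have := cardsD1 v S; rewrite vS (ksimp_card H) add1n => -[->].
Qed.

Lemma bd_face k S v : ksimp k S -> v \in S -> simp (S :\ v) ->
  bd k (rk S) (rk (S :\ v)) = sg S v.
Proof.
move=> HS vS HT; rewrite bdE !rkK HS HT /=.
rewrite (big_pred1 v) // => u /=; apply/idP/eqP => [/andP[uS /eqP E]|->].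
  apply/eqP; apply: contraT => neq.
  have : u \in S :\ v by rewrite in_setD1 neq.
  by rewrite E in_setD1 eqxx.
by rewrite vS eqxx.
Qed.

Lemma bd_nz k a b : bd k a b != 0 ->
  ksimp k (sv a) /\ exists2 v, v \in sv a & sv b = sv a :\ v.
Proof.
rewrite bdE; case: ifP => [/andP[Hk _]|]; last by rewrite eqxx.
move=> nz; split=> //.
case: (pickP (fun v => (v \in sv a) && (sv b == sv a :\ v))) => [v /andP[vS /eqP E]|none].
  by exists v.
by rewrite big_pred0 ?eqxx in nz.
Qed.

Lemma bd_row k S (g : 'I_NN -> F) : ksimp k.+1 S ->
  \sum_b bd k.+1 (rk S) b * g b = \sum_(v in S) sg S v * g (rk (S :\ v)).
Proof.
move=> HS.
transitivity (\sum_b \sum_(v in S) (if sv b == S :\ v then sg S v * g b else 0)).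
  apply: eq_bigr => b _; rewrite bdE rkK HS /=.
  case: ifP => Hb.
    rewrite big_distrl /= big_mkcondr /=; apply: eq_bigr => v _.
    by case: ifP.
  rewrite mul0r big1 // => v vS; case: ifP => // /eqP E.
  by rewrite E (face_simp v HS) in Hb.
rewrite exchange_big /=; apply: eq_bigr => v vS.
rewrite -big_mkcond /= (big_pred1 (rk (S :\ v))) // => b /=.
by apply/eqP/eqP => [<-|->]; rewrite ?svK ?rkK.
Qed.


Lemma card_lt_D1 (S : {set 'I_n}) (v w : 'I_n) : v != w ->
  #|[set u in S | (u < w)%N]| = (((v \in S) && (v < w)%N) + #|[set u in S :\ v | (u < w)%N]|)%N.
Proof.
move=> vw; rewrite (cardsD1 v); rewrite inE; congr (_ + _).
apply: eq_card => u; rewrite !inE; case: (u =P v) => [->|] //=.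
Qed.

Lemma sg_swap_lt (S : {set 'I_n}) (v w : 'I_n) : v \in S -> (v < w)%N ->
  sg S v * sg (S :\ v) w = - (sg S w * sg (S :\ w) v).
Proof.
move=> vS lt; have vw : v != w by rewrite neq_ltn lt.
rewrite /sg (card_lt_D1 S vw) (card_lt_D1 S (w:=v) (v:=w)); last by rewrite eq_sym.
rewrite [(w < v)%N]ltnNge (ltnW lt) /= andbF add0n.
rewrite vS lt /= add1n exprS; ring.
Qed.

Lemma sg_swap (S : {set 'I_n}) (v w : 'I_n) : v \in S -> w \in S -> v != w ->
  sg S v * sg (S :\ v) w = - (sg S w * sg (S :\ w) v).
Proof.
move=> vS wS vw; case: (ltngtP v w) => [lt||eq]; first exact: sg_swap_lt.
  by move=> lt; rewrite (sg_swap_lt wS lt) opprK.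
by move/val_inj: eq vw => ->; rewrite eqxx.
Qed.

Lemma sum_antisym (G : 'I_n -> 'I_n -> F) :
  (forall v w, G v w = - G w v) -> (forall v, G v v = 0) ->
  \sum_v \sum_w G v w = 0.
Proof.
move=> As D.
have -> : \sum_v \sum_w G v w =
   \sum_(v : 'I_n) \sum_(w : 'I_n) (if (v < w)%N then G v w else 0) +
   \sum_(v : 'I_n) \sum_(w : 'I_n) (if (w < v)%N then G v w else 0).
  rewrite -big_split; apply: eq_bigr => v _; rewrite -big_split; apply: eq_bigr => w _ /=.
  case: (ltngtP v w) => [_|_|eq]; rewrite ?addr0 ?add0r //.
  by move/val_inj: eq => ->; rewrite D.
rewrite [X in _ + X]exchange_big /=.
rewrite -big_split /= big1 // => v _; rewrite -big_split big1 //= => w _.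
by case: ifP => _; rewrite ?(As v w) ?addNr ?addr0.
Qed.

Lemma setD1C (S : {set 'I_n}) v w : S :\ v :\ w = S :\ w :\ v.
Proof. by rewrite !setDDl setUC. Qed.

Lemma dd k : (0 < k)%N -> bd k.+1 *m bd k = 0.
Proof.
move=> k0; apply/matrixP => a c; rewrite !mxE.
case Ha: (ksimp k.+1 (sv a)); last first.
  by rewrite big1 // => b _; rewrite bdE Ha /= mul0r.
rewrite -[a]svK (bd_row _ Ha); set S := sv a.
case Hc: (simp (sv c)); last first.
  by rewrite big1 // => v _; rewrite bdE Hc andbF mulr0.
pose G v w := if (v \in S) && (w \in S) && (v != w) && (sv c == S :\ v :\ w)
  then sg S v * sg (S :\ v) w else 0.
transitivity (\sum_v \sum_w G v w).
  rewrite big_mkcond /=; apply: eq_bigr => v _.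
  case: ifP => vS; last by rewrite big1 // => w _; rewrite /G vS.
  rewrite bdE rkK (ksimp_face Ha vS) Hc /= mulr_sumr big_mkcond /=.
  apply: eq_bigr => w _; rewrite /G vS /= in_setD1.
  by case: (w \in S); rewrite ?andbF ?andbT //= eq_sym; case: (_ == _); case: (_ == _).
apply: sum_antisym => [v w|v]; last by rewrite /G eqxx !andbF.
rewrite /G setD1C.
case vS: (v \in S); case wS: (w \in S); rewrite /= ?oppr0 //.
case: (v =P w) => [->|/eqP vw] /=; first by rewrite eqxx oppr0.
have -> : (w != v) = true by rewrite eq_sym.
by case: (_ == _); rewrite ?oppr0 // sg_swap.
Qed.


Lemma chains_supp k (z : 'rV[F]_NN) a : (z <= ch k)%MS -> ~~ ksimp k (sv a) -> z 0 a = 0.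
Proof.
case/submxP => w ->; move=> Ha; rewrite /chains mul_mx_diag !mxE.
by rewrite /sv in Ha; rewrite (negbTE Ha) mulr0.
Qed.

Lemma supp_chains k (z : 'rV[F]_NN) :
  (forall a, ~~ ksimp k (sv a) -> z 0 a = 0) -> (z <= ch k)%MS.
Proof.
move=> H; apply/submxP; exists z; rewrite /chains mul_mx_diag.
apply/matrixP => i j; rewrite !mxE (ord1 i).
case Hj: (is_ksimplex e k (enum_val j)); first by rewrite mulr1.
by rewrite H ?mul0r // /sv Hj.
Qed.

Definition cond v k S := ksimp k S && (v \notin S) && simp (v |: S).

Definition Dm v k : 'M[F]_NN := \matrix_(a, b)
  (if cond v k (sv a) then sg (v |: sv a) v * (b == rk (v |: sv a))%:R else 0).
Definition Em v k := Dm v k *m bd k.+1.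

Lemma ksimp_U1 v k S : cond v k S -> ksimp k.+1 (v |: S).
Proof.
case/andP=> /andP[Hk vS] Hs; rewrite /is_ksimplex Hs cardsU1 vS (ksimp_card Hk) /=. by rewrite add1n.
Qed.

Lemma Em_entry v k a b : Em v k a b =
  if cond v k (sv a) then sg (v |: sv a) v * bd k.+1 (rk (v |: sv a)) b else 0.
Proof.
rewrite mxE; under eq_bigr do rewrite mxE.
case: ifP => _; last by rewrite big1 // => c _; rewrite mul0r.
rewrite (bigD1 (rk (v |: sv a))) //= eqxx mulr1 big1 ?addr0 // => c /negbTE ->.
by rewrite mulr0 mul0r.
Qed.

Lemma Em_sub v k (z : 'rV[F]_NN) : (z *m Em v k <= boundaries F e k)%MS.
Proof.
rewrite /Em mulmxA /boundaries; apply: submxMr; apply: supp_chains => c Hc.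
rewrite mxE big1 // => a _; rewrite mxE; case: ifP => Hca; last by rewrite mulr0.
case: (c =P rk (v |: sv a)) => [Ec|]; last by rewrite mulr0 mulr0.
by rewrite Ec rkK (ksimp_U1 Hca) in Hc.
Qed.

Lemma Em_off v k (z : 'rV[F]_NN) b : v \notin sv b ->
  (z *m Em v k) 0 b = if cond v k (sv b) then z 0 b else 0.
Proof.
move=> vb; rewrite mxE (bigD1 b) //= big1 ?addr0; last first.
  move=> a ab; rewrite Em_entry; case: ifP => Ha; last by rewrite mulr0.
  case: (eqVneq (bd k.+1 (rk (v |: sv a)) b) 0) => [->|nz]; first by rewrite !mulr0.
  case: (bd_nz nz) => _ [u]; rewrite rkK => uS Eb.
  case: (u =P v) => [Euv|/eqP uv].
    move: Ha => /andP[/andP[_ va] _].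
    by rewrite Euv setU1K // in Eb; move/sv_inj: Eb => Eb; rewrite Eb eqxx in ab.
  by move: vb; rewrite Eb in_setD1 eq_sym uv setU11.
rewrite Em_entry; case: ifP => Hb; last by rewrite mulr0.
have HT : simp ((v |: sv b) :\ v) by rewrite setU1K //; move: Hb => /andP[/andP[/ksimp_simp]].
have := bd_face (ksimp_U1 Hb) (setU11 v (sv b)) HT.
by rewrite setU1K // svK => ->; rewrite sg_sq mulr1.
Qed.

Lemma bnd_chains k : (boundaries F e k <= ch k)%MS.
Proof.
rewrite /boundaries; apply: submx_trans (submxMl _ _) _.
apply/row_subP => a; apply: supp_chains => b Hb; rewrite mxE.
apply/eqP; apply: contraT => nz; case: (bd_nz nz) => Ha [v va Eb].
by rewrite Eb (ksimp_face Ha va) in Hb.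
Qed.

Lemma bnd_cyc k (x : 'rV[F]_NN) : (0 < k)%N -> (x <= boundaries F e k)%MS -> x *m bd k = 0.
Proof.
move=> k0 /submxP[w ->]; rewrite /boundaries -!mulmxA dd // !mulmx0.
by [].
Qed.

Lemma cyc_single k (z : 'rV[F]_NN) b w0 : (z <= ch k)%MS -> z *m bd k = 0 ->
  simp (sv b) -> w0 \notin sv b ->
  (forall w, w \notin sv b -> w != w0 -> z 0 (rk (w |: sv b)) = 0) ->
  z 0 (rk (w0 |: sv b)) = 0.
Proof.
move=> Hz Hc Hb w0b Hw; have := congr1 (fun m : 'rV[F]_NN => m 0 b) Hc.
rewrite !mxE (bigD1 (rk (w0 |: sv b))) //= big1 ?addr0; last first.
  move=> a ne; case: (eqVneq (bd k a b) 0) => [->|nz]; first by rewrite mulr0.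
  case: (bd_nz nz) => _ [u ua Eb].
  have ub : u \notin sv b by rewrite Eb setD11.
  have Ea : sv a = u |: sv b by rewrite Eb setD1K.
  have uw0 : u != w0 by apply: contraNneq ne => Eu; rewrite -Eu -Ea svK.
  by rewrite -[a]svK Ea Hw // mul0r.
case Hk: (ksimp k (w0 |: sv b)); last first.
  by move=> _; apply: (chains_supp Hz); rewrite rkK Hk.
have HT : simp ((w0 |: sv b) :\ w0) by rewrite setU1K.
have := bd_face Hk (setU11 w0 (sv b)) HT; rewrite setU1K // svK => ->.
by move/eqP; rewrite mulf_eq0 (negbTE (sg_neq0 _ _)) orbF => /eqP.
Qed.

Lemma elim_off v k (z : 'rV[F]_NN) b : v \notin sv b ->
  (z - z *m Em v k) 0 b = if cond v k (sv b) then 0 else z 0 b.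
Proof.
move=> vb; rewrite mxE [X in _ + X]mxE Em_off //.
by case: ifP => _; rewrite ?subrr ?subr0.
Qed.

Lemma cone_kill v k (z : 'rV[F]_NN) : (0 < k)%N -> (z <= ch k)%MS -> z *m bd k = 0 ->
  (forall a, z 0 a != 0 -> (v \in sv a) || simp (v |: sv a)) ->
  (z <= boundaries F e k)%MS.
Proof.
move=> k0 Hz Hc Hcone.
set z' := z - z *m Em v k.
have Hz' : (z' <= ch k)%MS.
  apply: addmx_sub Hz _; rewrite (eqmx_opp (z *m Em v k)).
  exact: submx_trans (Em_sub _ _ _) (bnd_chains k).
have Cz' : z' *m bd k = 0 by rewrite mulmxBl Hc (bnd_cyc k0 (Em_sub _ _ _)) subr0.
have off : forall b, v \notin sv b -> z' 0 b = 0.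
  move=> b vb; rewrite elim_off //; case: ifP => // Hb.
  apply/eqP; apply: contraT => nz; move: (Hcone b nz); rewrite (negbTE vb) /= => Hs.
  have Hk : ksimp k (sv b) by apply: contraT => Hk; rewrite (chains_supp Hz Hk) eqxx in nz.
  by rewrite /cond Hk vb Hs in Hb.
have z'0 : z' = 0.
  apply/rowP => b; rewrite [RHS]mxE; case vb: (v \in sv b); last by rewrite off ?vb.
  case Hk: (ksimp k (sv b)); last by apply: (chains_supp Hz'); rewrite Hk.
  have HT : simp (sv b :\ v).
    by case: k k0 Hk {Hz Hc Hcone z' Hz' Cz' off} => // k' _ Hk; exact: face_simp Hk.
  have := cyc_single (b := rk (sv b :\ v)) (w0 := v) Hz' Cz'.
  rewrite rkK setD1K // svK; apply => //; first by rewrite setD11.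
  move=> w wT wv; apply: off; rewrite rkK in_setU1 eq_sym (negbTE wv) /=.
  by rewrite setD11.
have -> : z = z *m Em v k by apply/eqP; rewrite -subr_eq0 -/z' z'0.
exact: Em_sub.
Qed.

Lemma betti_le k m (P : 'M[F]_(NN, m)) :
  (forall z : 'rV[F]_NN, (z <= ch k)%MS -> z *m bd k = 0 -> z *m P = 0 ->
     (z <= boundaries F e k)%MS) -> (betti F e k <= m)%N.
Proof.
move=> H; rewrite /betti; have h3 := mxrank_mul_ker (cycles F e k) P.
have S1 : (cycles F e k :&: kermx P <= boundaries F e k)%MS.
  apply/row_subP => i; have := row_sub i (cycles F e k :&: kermx P)%MS.
  rewrite sub_capmx => /andP[Hr /sub_kermxP HP].
  move: Hr; rewrite /cycles sub_capmx => /andP[Hc /sub_kermxP Hk].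
  exact: H.
have h2 := mxrankS S1; have h1 := rank_leq_col (cycles F e k *m P).
lia.
Qed.


Lemma elim_props v k (z : 'rV[F]_NN) : (0 < k)%N -> (z <= ch k)%MS -> z *m bd k = 0 ->
  ((z - z *m Em v k) <= ch k)%MS /\ (z - z *m Em v k) *m bd k = 0.
Proof.
move=> k0 Hz Hc; split.
  apply: addmx_sub Hz _; rewrite (eqmx_opp (z *m Em v k)).
  exact: submx_trans (Em_sub _ _ _) (bnd_chains k).
by rewrite mulmxBl Hc (bnd_cyc k0 (Em_sub _ _ _)) subr0.
Qed.

Lemma sum_pick (u : 'rV[F]_NN) x : \sum_c u 0 c * (c == x)%:R = u 0 x.
Proof.
rewrite (bigD1 x) //= eqxx mulr1 big1 ?addr0 // => c /negbTE ->.
by rewrite mulr0.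
Qed.

Lemma no_ksimp_chains k : (forall S, ~~ ksimp k S) -> ch k = 0.
Proof.
move=> H; rewrite /chains; apply/matrixP => i j; rewrite !mxE.
by rewrite (negbTE (H _)) mul0rn.
Qed.

End Hom.



Lemma card_ltl (n l : nat) : (l <= n)%N -> #|[set u : 'I_n | (u < l)%N]| = l.
Proof.
move=> ln.
have -> : [set u : 'I_n | (u < l)%N] = widen_ord ln @: [set: 'I_l].
  apply/setP => u; rewrite inE; apply/idP/imsetP => [ul|[v _ ->]]; last by rewrite /= ltn_ord.
  by exists (Ordinal ul) => //; apply: val_inj.
by rewrite card_imset ?cardsT ?card_ord // => x y /(congr1 val) /= => h; apply: val_inj.
Qed.

Lemma card_gel (n l : nat) : (l <= n)%N -> #|[set u : 'I_n | (l <= u)%N]| = (n - l)%N.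
Proof.
move=> ln; have := cardsC [set u : 'I_n | (u < l)%N]; rewrite card_ltl // card_ord.
have -> : ~: [set u : 'I_n | (u < l)%N] = [set u : 'I_n | (l <= u)%N].
  by apply/setP => u; rewrite !inE ltnNge negbK.
lia.
Qed.

Section Graph.
Variable F : fieldType.
Variables n l : nat.
Variable e : rel 'I_n.
Hypothesis esym : forall i j, e i j = e j i.
Variables a0 b0 : 'I_n.
Hypothesis a0l : (a0 < l)%N.
Hypothesis b0l : (l <= b0)%N.
Hypothesis thrA : forall u v : 'I_n, (u < l)%N -> (v < l)%N -> u != v -> e u v -> u != a0 -> e u a0.
Hypothesis thrB : forall u v : 'I_n, (l <= u)%N -> (l <= v)%N -> u != v -> e u v -> u != b0 -> e u b0.

Local Notation NN := (N n).
Local Notation simp := (is_simplex e).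
Local Notation ksimp := (is_ksimplex e).
Local Notation bd := (boundary F e).
Local Notation ch := (chains F e).

Lemma simp_edge S p q : simp S -> p \in S -> q \in S -> p != q -> e p q.
Proof. by case/andP => _ /forall_inP H pS qS pq; exact: (implyP (forall_inP (H p pS) q qS) pq). Qed.

Lemma simpU1 x S : simp S -> (forall u, u \in S -> u != x -> e x u) -> simp (x |: S).
Proof.
move=> HS H; apply/andP; split.
  by apply/set0Pn; exists x; rewrite setU11.
apply/forall_inP => u; rewrite in_setU1 => /orP[/eqP->|uS];
  apply/forall_inP => w; rewrite in_setU1 => /orP[/eqP->|wS]; apply/implyP => neq.
- by rewrite eqxx in neq.
- by apply: H; rewrite // eq_sym.
- by rewrite esym; apply: H.
- exact: simp_edge HS uS wS neq.
Qed.

Lemma simpU1_inv x S : simp S -> ~~ simp (x |: S) ->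
  exists2 u, u \in S & (u != x) && ~~ e x u.
Proof.
move=> HS Hn; case: (boolP [exists u in S, (u != x) && ~~ e x u]) => [/exists_inP[u uS H]|/exists_inPn H].
  by exists u.
case/negP: Hn; apply: simpU1 => // u uS ux.
by have := H u uS; rewrite ux /= negbK.
Qed.

Lemma cross_dec (p q u x : 'I_n) : [set p; q] = [set u; x] -> (u < l)%N -> (l <= x)%N ->
  (p = u /\ q = x) \/ (p = x /\ q = u).
Proof.
move=> E ul lx; have hux : (u < x)%N by apply: leq_trans ul lx.
have uin : u \in [set p; q] by rewrite E set21.
have xin : x \in [set p; q] by rewrite E set22.
move: uin xin; rewrite !inE => /orP[]/eqP hu /orP[]/eqP hx; subst.
- by rewrite ltnn in hux.
- by left.
- by right.
- by rewrite ltnn in hux.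
Qed.

Definition crossE (S : {set 'I_n}) :=
  [exists u : 'I_n, exists w : 'I_n, [&& (u < l)%N, (l <= w)%N & S == [set u; w]]].
Definition innerE (S : {set 'I_n}) :=
  [exists u : 'I_n, exists w : 'I_n,
     [&& (u < l)%N, u != a0, (l <= w)%N, w != b0 & S == [set u; w]]].

Lemma ksimp1_pair S : ksimp 1 S -> exists p q, [/\ p != q, e p q & S = [set p; q]].
Proof.
move=> H; have /cards2P[p [q [pq ES]]] : #|S| == 2 by rewrite (ksimp_card H).
exists p, q; split => //; apply: simp_edge (ksimp_simp H) _ _ pq; by rewrite ES ?set21 ?set22.
Qed.

Hypothesis Hcase : (forall p q : 'I_n, p != q -> e p q -> (p < l)%N != (q < l)%N) \/
                   (forall i j : 'I_n, (i < l)%N -> (l <= j)%N -> e i j).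

Section Z.
Variable z : 'rV[F]_NN.
Hypothesis Hz : (z <= ch 1)%MS.
Hypothesis Hc : z *m bd 1 = 0.
Let z' := z - z *m Em F e b0 1.
Let Hz'c := elim_props b0 (ltn0Sn 0) Hz Hc.

Lemma supp1 b : z' 0 b != 0 -> crossE (sv b).
Proof.
move=> nz; have Hk : ksimp 1 (sv b).
  by apply: contraT => Hk; rewrite (chains_supp (proj1 Hz'c) Hk) eqxx in nz.
have [p [q [pq epq Eb]]] := ksimp1_pair Hk.
case: (boolP ((p < l)%N != (q < l)%N)) => [side|].
  apply/existsP; case: (ltnP p l) => pl.
    exists p; apply/existsP; exists q; rewrite pl Eb eqxx andbT /=.
    by rewrite leqNgt; move: side; rewrite pl; case: (q < l)%N.
  have ql : (q < l)%N by move: side; rewrite ltnNge pl; case: (q < l)%N.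
  by exists q; apply/existsP; exists p; rewrite Eb setUC eqxx andbT pl ql.
rewrite negbK => /eqP same.
case: Hcase => [nw|ac]; first by move: (nw _ _ pq epq); rewrite same eqxx.
exfalso; move: nz.
have adj : forall u v : 'I_n, u != v -> e u v -> (u < l)%N = (v < l)%N -> u != b0 -> e b0 u.
  move=> u v uv euv suv ub; case: (ltnP u l) => ul.
    by rewrite esym; apply: ac.
  have lv : (l <= v)%N by rewrite leqNgt -suv -leqNgt.
  by rewrite esym; apply: thrB ul lv uv euv ub.
case: (boolP (b0 \in sv b)) => [b0S|b0S].
  have [w [wb Eb' ew lw]] : exists w, [/\ w != b0, sv b = b0 |: [set w], e w b0 & (l <= w)%N].
    move: b0S; rewrite Eb !inE => /orP[]/eqP Eb0.
      subst p; exists q; split => //; first by rewrite eq_sym.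
        by rewrite esym.
      by rewrite leqNgt -same -leqNgt.
    subst q; exists p; split => //; first by rewrite setUC.
    by rewrite leqNgt same -leqNgt.
  rewrite -[b]svK Eb'.
  have := cyc_single (b := rk [set w]) (w0 := b0) (proj1 Hz'c) (proj2 Hz'c).
  rewrite !rkK => ->; rewrite ?eqxx //.
  - apply/andP; split; first by apply/set0Pn; exists w; rewrite set11.
    by apply/forall_inP => u /set1P -> ; apply/forall_inP => v /set1P ->; rewrite eqxx.
  - by rewrite in_set1 eq_sym.
  move=> w' w'w w'b; apply/eqP; apply: contraT => nz'.
  have b0n : b0 \notin sv (rk (w' |: [set w])).
    by rewrite rkK !inE negb_or eq_sym w'b eq_sym wb.
  move: nz'; rewrite /z' elim_off //; case: ifP => [_|Hcond]; first by rewrite eqxx.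
  move=> nz'; move/negbT: Hcond; rewrite /cond b0n andbT negb_and.
  have Hk' : ksimp 1 (sv (rk (w' |: [set w]))).
    by apply: contraT => Hk'; rewrite (chains_supp Hz Hk') eqxx in nz'.
  have w'w' : w' != w by move: w'w; rewrite in_set1.
  have ew' : e w' w.
    apply: simp_edge (ksimp_simp Hk') _ _ w'w'; by rewrite rkK !inE eqxx ?orbT.
  rewrite Hk' /= => Hn; suff: simp (b0 |: sv (rk [set w'; w])) by rewrite (negbTE Hn).
  apply: simpU1 (ksimp_simp Hk') _.
  rewrite rkK => u; rewrite !inE => /orP[]/eqP -> ub.
    case: (ltnP w' l) => w'l; first by rewrite esym; apply: ac.
    apply: adj w'w' ew' _ ub.
    by rewrite ltnNge w'l ltnNge lw.
  by rewrite esym.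
rewrite /z' elim_off //; case: ifP => [_|Hcond]; first by rewrite eqxx.
move=> _; move/negbT: Hcond; rewrite /cond Hk b0S andbT /= => /negP; apply.
apply: simpU1 (ksimp_simp Hk) _ => u; rewrite Eb !inE => /orP[]/eqP -> ub.
  exact: adj pq epq same ub.
by apply: (adj q p) => //; [rewrite eq_sym | rewrite esym].
Qed.

Lemma simp1 x : simp [set x].
Proof.
apply/andP; split; first by apply/set0Pn; exists x; rewrite set11.
by apply/forall_inP => u /set1P -> ; apply/forall_inP => v /set1P ->; rewrite eqxx.
Qed.

Lemma star : (forall b, innerE (sv b) -> z' 0 b = 0) -> z' = 0.
Proof.
move=> Hin; have Z'c := proj1 Hz'c; have C := proj2 Hz'c.
have mkin : forall u w : 'I_n, (u < l)%N -> u != a0 -> (l <= w)%N -> w != b0 -> z' 0 (rk [set u; w]) = 0.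
  move=> u w ul ua lw wb; apply: Hin; apply/existsP; exists u; apply/existsP; exists w.
  by rewrite ul ua lw wb rkK eqxx.
have S1 : forall w : 'I_n, (l <= w)%N -> w != b0 -> z' 0 (rk [set a0; w]) = 0.
  move=> w lw wb.
  have := cyc_single (b := rk [set w]) (w0 := a0) Z'c C; rewrite !rkK; apply.
  - exact: simp1.
  - by rewrite in_set1; apply: contraTneq (leq_trans a0l lw) => ->; rewrite ltnn.
  move=> w' w'w w'a; apply/eqP; apply: contraT => nz.
  have := supp1 nz; rewrite rkK => /existsP[u /existsP[x /and3P[ul lx /eqP E]]].
  case: (cross_dec E ul lx) => [[E1 E2]|[E1 E2]].
    by subst; rewrite mkin ?eqxx in nz.
  by subst; move: (leq_trans ul lw); rewrite ltnn.
have S2 : forall u : 'I_n, (u < l)%N -> u != a0 -> z' 0 (rk [set b0; u]) = 0.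
  move=> u ul ua.
  have := cyc_single (b := rk [set u]) (w0 := b0) Z'c C; rewrite !rkK; apply.
  - exact: simp1.
  - by rewrite in_set1; apply: contraTneq (leq_trans ul b0l) => <-; rewrite ltnn.
  move=> w' w'u w'b; apply/eqP; apply: contraT => nz.
  have := supp1 nz; rewrite rkK => /existsP[u0 /existsP[x /and3P[u0l lx /eqP E]]].
  case: (cross_dec E u0l lx) => [[E1 E2]|[E1 E2]].
    by subst; move: (leq_trans ul lx); rewrite ltnn.
  by subst; rewrite setUC mkin ?eqxx in nz.
have S3 : z' 0 (rk [set b0; a0]) = 0.
  have := cyc_single (b := rk [set a0]) (w0 := b0) Z'c C; rewrite !rkK; apply.
  - exact: simp1.
  - by rewrite in_set1; apply: contraTneq (leq_trans a0l b0l) => <-; rewrite ltnn.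
  move=> w' w'u w'b; apply/eqP; apply: contraT => nz.
  have := supp1 nz; rewrite rkK => /existsP[u0 /existsP[x /and3P[u0l lx /eqP E]]].
  case: (cross_dec E u0l lx) => [[E1 E2]|[E1 E2]].
    by subst; move: (leq_trans a0l lx); rewrite ltnn.
  by subst; rewrite setUC S1 ?eqxx in nz.
apply/rowP => b; rewrite [RHS]mxE; apply/eqP; apply: contraT => nz.
have := supp1 nz => /existsP[u /existsP[x /and3P[ul lx /eqP E]]].
rewrite -[b]svK E in nz.
case: (u =P a0) => [ua|/eqP ua]; case: (x =P b0) => [xb|/eqP xb].
- by subst; rewrite setUC S3 eqxx in nz.
- by subst; rewrite S1 ?eqxx in nz.
- by subst; rewrite setUC S2 ?eqxx in nz.
- by rewrite mkin ?eqxx in nz.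
Qed.

End Z.

Lemma nok (nw : forall p q : 'I_n, p != q -> e p q -> (p < l)%N != (q < l)%N) k S :
  (1 < k)%N -> ~~ ksimp k S.
Proof.
move=> k1; apply/negP => Hk; have HS := ksimp_simp Hk.
have cS := ksimp_card Hk.
set A := [set u : 'I_n | (u < l)%N].
have := cardsID A S; rewrite cS => h.
case: (ltnP 1 #|S :&: A|) => [/card_gt1P[p [q [pS qS pq]]]|h1].
  move: pS qS; rewrite !inE => /andP[pS pl] /andP[qS ql].
  by move: (nw _ _ pq (simp_edge HS pS qS pq)); rewrite pl ql.
have /card_gt1P[p [q [pS qS pq]]] : (1 < #|S :\: A|)%N by move: h h1 k1; move: #|S :&: A| #|S :\: A| => x y; lia.
move: pS qS; rewrite !inE => /andP[pl pS] /andP[ql qS].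
by move: (nw _ _ pq (simp_edge HS pS qS pq)); rewrite (negbTE pl) (negbTE ql).
Qed.

Lemma part3 k : (1 < k)%N -> betti F e k = 0%N.
Proof.
move=> k1; apply/eqP; rewrite -leqn0.
have k0 : (0 < k)%N by apply: ltnW.
apply: (betti_le (P := 0 : 'M[F]_(NN, 0))) => z Hz Hc _.
case: Hcase => [nw|ac].
  have -> : z = 0.
    apply/rowP => b; rewrite [RHS]mxE; apply: (chains_supp Hz); exact: nok.
  exact: sub0mx.
set z' := z - z *m Em F e b0 k.
have [Z'c C] := elim_props b0 k0 Hz Hc.
have Hks : forall b, z' 0 b != 0 -> ksimp k (sv b).
  by move=> b nz; apply: contraT => Hk; rewrite (chains_supp Z'c Hk) eqxx in nz.
have C1 : forall b, z' 0 b != 0 -> b0 \notin sv b -> exists s,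
    [/\ s \in sv b, (l <= s)%N, ~~ e s b0 & forall t, t \in sv b -> (l <= t)%N -> t = s].
  move=> b nz b0S; have Hk := Hks b nz.
  move: nz; rewrite /z' elim_off //; case: ifP => [_|Hcond]; first by rewrite eqxx.
  move=> _; move/negbT: Hcond; rewrite /cond Hk b0S /= => Hn.
  have [s sS /andP[sb nes]] := simpU1_inv (ksimp_simp Hk) Hn.
  have ls : (l <= s)%N.
    by case: (ltnP s l) => // sl; move: nes; rewrite esym ac.
  exists s; split => //; first by rewrite esym.
  move=> t tS lt; apply/eqP; apply: contraT => ts.
  have est : e s t by apply: simp_edge (ksimp_simp Hk) sS tS _; rewrite eq_sym.
  by move: nes; rewrite esym (thrB ls lt _ est sb) // eq_sym.
have C2 : forall b, z' 0 b != 0 -> forall t t', t \in sv b -> t' \in sv b ->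
    (l <= t)%N -> (l <= t')%N -> t = t'.
  move=> b nz; case: (boolP (b0 \in sv b)) => b0S; last first.
    have [s [_ _ _ U]] := C1 b nz b0S.
    by move=> t t' tS t'S lt lt'; rewrite (U t) // (U t').
  suff U : forall t, t \in sv b -> (l <= t)%N -> t = b0.
    by move=> t t' tS t'S lt lt'; rewrite (U t) // (U t').
  move=> t tS lt; apply/eqP; apply: contraT => tb; exfalso.
  have Hk := Hks b nz.
  have HT : is_simplex e (sv b :\ b0).
    by case: k k1 k0 Hk {Hz Hc z' Z'c C Hks C1 nz} => // k' _ _ Hk; exact: face_simp Hk.
  have := cyc_single (b := rk (sv b :\ b0)) (w0 := b0) Z'c C.
  rewrite rkK setD1K // svK => H.
  move: nz; rewrite H ?eqxx ?setD11 //.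
  move=> w wT wb; apply/eqP; apply: contraT => nzw.
  have b0n : b0 \notin sv (rk (w |: sv b :\ b0)).
    by rewrite rkK !inE negb_or eq_sym wb eqxx.
  have [s [_ _ nes U]] := C1 _ nzw b0n.
  have ts : t = s by apply: U => //; rewrite rkK !inE tb tS orbT.
  move: nes; rewrite -ts.
  by rewrite (simp_edge (ksimp_simp Hk) tS b0S tb).
have Hz'B : (z' <= boundaries F e k)%MS.
  apply: (cone_kill (v := a0)) k0 Z'c C _ => b nz.
  case: (boolP (a0 \in sv b)) => //= a0S.
  have Hk := Hks b nz.
  apply: simpU1 (ksimp_simp Hk) _ => s sS sa.
  case: (ltnP s l) => sl; last by apply: ac.
  have : (1 < #|sv b :\ s|)%N.
    by have := cardsD1 s (sv b); rewrite sS (ksimp_card Hk); lia.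
  case/card_gt1P => [t1 [t2 [t1in t2in t12]]].
  move: t1in t2in; rewrite !inE => /andP[t1s t1S] /andP[t2s t2S].
  have [s' [s'S s's s'l]] : exists s', [/\ s' \in sv b, s' != s & (s' < l)%N].
    case: (ltnP t1 l) => t1l; first by exists t1.
    case: (ltnP t2 l) => t2l; first by exists t2.
    by move: t12; rewrite (C2 b nz t1 t2) ?eqxx.
  have ess' : e s s' by apply: simp_edge (ksimp_simp Hk) sS s'S _; rewrite eq_sym.
  by rewrite esym; apply: thrA sl s'l _ ess' sa; rewrite eq_sym.
have -> : z = z' + z *m Em F e b0 k by rewrite /z' subrK.
apply: addmx_sub; [exact: Hz'B | exact: Em_sub].
Qed.

Lemma part1 : (betti F e 1 <= (l - 1) * (n - l - 1))%N.
Proof.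
set Inner := [set a : 'I_NN | innerE (sv a)].
pose pim : 'M[F]_(NN, #|Inner|) := \matrix_(a, j) (a == enum_val j)%:R.
apply: leq_trans (betti_le (P := (1%:M - Em F e b0 1) *m pim) _) _.
  move=> z Hz Hc HP.
  have z'0 : z - z *m Em F e b0 1 = 0.
    apply: star Hz Hc _ => b Hb; have bin : b \in Inner by rewrite inE.
    have := congr1 (fun m : 'M[F]_(1, #|Inner|) => m 0 (enum_rank_in bin b)) HP.
    rewrite mulmxA mulmxBr mulmx1 [LHS]mxE [RHS]mxE.
    under eq_bigr => i _ do rewrite /pim [X in _ * X]mxE (enum_rankK_in bin bin).
    by rewrite sum_pick.
  have -> : z = z *m Em F e b0 1 by apply/eqP; rewrite -subr_eq0 z'0.
  exact: Em_sub.
have ln : (l <= n)%N by apply: leq_trans b0l (ltnW (ltn_ord b0)).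
set A := [set u : 'I_n | (u < l)%N]; set B := [set w : 'I_n | (l <= w)%N].
have cA : #|A :\ a0| = (l - 1)%N.
  have := cardsD1 a0 A; rewrite card_ltl // inE a0l; lia.
have cB : #|B :\ b0| = (n - l - 1)%N.
  have := cardsD1 b0 B; rewrite card_gel // inE b0l; lia.
have sub : Inner \subset [set rk [set p.1; p.2] | p in setX (A :\ a0) (B :\ b0)].
  apply/subsetP => a; rewrite inE => /existsP[u /existsP[w /and5P[ul ua lw wb /eqP E]]].
  apply/imsetP; exists (u, w); first by rewrite !inE ua ul wb lw.
  by rewrite /= -E svK.
apply: leq_trans (subset_leq_card sub) _.
by apply: leq_trans (leq_imset_card _ _) _; rewrite cardsX cA cB.
Qed.

Lemma pair_sum (p q : 'I_n) : p != q -> \sum_(v in [set p; q]) sg F [set p; q] v = 0.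
Proof.
wlog lt : p q / (p < q)%N.
  move=> W pq; case: (ltngtP p q) => [lt|lt|eq]; first exact: W.
    by rewrite setUC; apply: W => //; rewrite eq_sym.
  by move: pq; rewrite (val_inj eq) eqxx.
move=> pq; rewrite big_setU1 ?big_set1 /sg; last by rewrite in_set1.
have -> : [set u in [set p; q] | (u < p)%N] = set0.
  apply/setP => u; rewrite !inE; case: (u =P p) => [->|_]; first by rewrite ltnn.
  case: (u =P q) => [->|_] //=; by rewrite ltnNge (ltnW lt).
have -> : [set u in [set p; q] | (u < q)%N] = [set p].
  apply/setP => u; rewrite !inE; case: (u =P p) => [->|_]; first by rewrite lt.
  by case: (u =P q) => [->|_] //=; rewrite ltnn.
by rewrite cards0 cards1 expr0 expr1 /= addrN.
Qed.

Lemma part2 (Heq : forall i j, e i j = (i < l)%N (+) (j < l)%N) :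
  betti F e 1 = ((l - 1) * (n - l - 1))%N.
Proof.
have nw : forall p q : 'I_n, p != q -> e p q -> (p < l)%N != (q < l)%N.
  by move=> p q _; rewrite Heq; case: (p < l)%N; case: (q < l)%N.
apply/eqP; rewrite eqn_leq part1 /=.
have B0 : boundaries F e 1 = 0.
  by rewrite /boundaries no_ksimp_chains ?mul0mx // => S; apply: nok.
rewrite /betti B0 mxrank0 subn0.
have ln : (l < n)%N by apply: leq_trans (ltn_ord b0).
set A := [set u : 'I_n | (u < l)%N]; set B := [set w : 'I_n | (l <= w)%N].
set Cr := [set a : 'I_NN | crossE (sv a)].
pose rho : 'M[F]_(#|Cr|, NN) := \matrix_(j, b) (b == enum_val j)%:R.
pose rho0 : 'M[F]_(n, NN) := \matrix_(i, b) (b == rk [set i])%:R.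
pose f : 'M[F]_(NN, 1) := const_mx 1.
have cross_ks : forall S, crossE S -> ksimp 1 S.
  move=> S /existsP[u /existsP[w /and3P[ul lw /eqP ->]]].
  have uw : u != w by apply: contraTneq (leq_trans ul lw) => ->; rewrite ltnn.
  rewrite /is_ksimplex cards2 uw eqxx andbT.
  apply: simpU1 (simp1 w) _ => v /set1P -> _.
  by rewrite Heq ul ltnNge lw.
have rho_ch : (rho <= ch 1)%MS.
  apply/row_subP => j; apply: supp_chains => b Hb; rewrite !mxE.
  case: eqP => // Eb; exfalso.
  have := enum_valP j; rewrite inE -Eb => /cross_ks.
  by rewrite (negbTE Hb).
have rk_rho : #|Cr| = \rank rho.
  apply/eqP; rewrite eqn_leq rank_leq_row andbT.
  have h : rho *m rho^T = 1%:M.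
    apply/matrixP => i j; rewrite !mxE.
    rewrite (bigD1 (enum_val i)) //= big1 ?addr0; last first.
      by move=> b /negbTE; rewrite !mxE => ->; rewrite mul0r.
    by rewrite !mxE eqxx mul1r (inj_eq enum_val_inj) eq_sym.
  by have := mxrankM_maxl rho rho^T; rewrite h mxrank1.
have cardCr : (l * (n - l) <= #|Cr|)%N.
  have cD : #|setX A B| = (l * (n - l))%N by rewrite cardsX card_ltl ?card_gel // ltnW.
  have sub : [set rk [set p.1; p.2] | p in setX A B] \subset Cr.
    apply/subsetP => a /imsetP[[u w]]; rewrite !inE /= => /andP[ul lw] ->.
    by apply/existsP; exists u; apply/existsP; exists w; rewrite ul lw rkK eqxx.
  rewrite -cD -(card_in_imset (f := fun p : 'I_n * 'I_n => rk [set p.1; p.2])).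
    exact: subset_leq_card.
  move=> [p1 p2] [q1 q2]; rewrite !inE /= => /andP[p1l lp2] /andP[q1l lq2] /rk_inj E.
  case: (cross_dec E q1l lq2) => [[-> ->] //|[E1 _]].
  by move: (leq_trans p1l lq2); rewrite E1 ltnn.
have Z1 : (rho :&: kermx (bd 1) <= cycles F e 1)%MS.
  by rewrite /cycles; apply: capmxS => //.
have r1 := mxrank_mul_ker rho (bd 1).
have bdf : bd 1 *m f = 0.
  apply/matrixP => a j; rewrite [LHS]mxE [RHS]mxE.
  case Ha: (ksimp 1 (sv a)); last first.
    by rewrite big1 // => b _; rewrite bdE Ha /= mul0r.
  under eq_bigr do rewrite [X in _ * X]mxE.
  have H := bd_row (fun _ : 'I_NN => (1 : F)) Ha; rewrite svK /= in H; rewrite H.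
  have [p [q [pq _ ->]]] := ksimp1_pair Ha.
  by under eq_bigr do rewrite mulr1; rewrite pair_sum.
have sub : (rho *m bd 1 <= rho0 :&: kermx f)%MS.
  rewrite sub_capmx; apply/andP; split; last first.
    by apply/sub_kermxP; rewrite -mulmxA bdf mulmx0.
  apply: submx_trans (submxMl _ _) _; apply/row_subP => a.
  set y := row a (bd 1).
  apply/submxP; exists (\row_i y 0 (rk [set i])); apply/rowP => b; rewrite [RHS]mxE.
  under eq_bigr do rewrite /rho0 [X in X * _]mxE [X in _ * X]mxE.
  case: (boolP [exists i, sv b == [set i]]) => [/existsP[i0 /eqP Eb]|none].
    rewrite (bigD1 i0) //= big1 ?addr0.
      by rewrite -Eb svK eqxx mulr1.
    move=> i ii0; case: eqP => [Ebi|]; last by rewrite mulr0.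
    by move: Eb; rewrite Ebi rkK => /set1_inj Ei; rewrite Ei eqxx in ii0.
  rewrite big1; last first.
    move=> i _; case: eqP => [Ebi|]; last by rewrite mulr0.
    by move: none; rewrite Ebi rkK => /existsP[]; exists i.
  rewrite /y mxE.
  apply/eqP; apply: contraT => nz; case: (bd_nz nz) => Ha [v va Eb].
  have := ksimp_face (k := 0) Ha va; rewrite -Eb => /ksimp_card /eqP /cards1P[i Ei].
  by move: none => /existsP[]; exists i; rewrite Ei.
have r2 : (\rank (rho *m bd 1) <= n.-1)%N.
  have := mxrankS sub; have := mxrank_mul_ker rho0 f.
  have := rank_leq_row rho0.
  have : (0 < \rank (rho0 *m f))%N.
    rewrite lt0n mxrank_eq0; apply/eqP => /matrixP /(_ a0 0); rewrite !mxE.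
    rewrite (bigD1 (rk [set a0])) //= big1 ?addr0.
      by rewrite !mxE eqxx mul1r => /eqP; rewrite oner_eq0.
    by move=> b /negbTE; rewrite !mxE => ->; rewrite mul0r.
  move: (\rank (rho0 *m f)) (\rank rho0) (\rank (rho0 :&: kermx f)%MS) (\rank (rho *m bd 1)) => x y w u.
  lia.
have r3 := mxrankS Z1.
move: r1 r2 r3 cardCr rk_rho a0l ln.
move: (\rank (rho *m bd 1)) (\rank (rho :&: kermx (bd 1))%MS) (\rank (cycles F e 1)) (\rank rho) => x y w u.
nia.
Qed.

End Graph.

Unset Implicit Arguments.

Theorem theorem2 (F : fieldType) (R : realFieldType) (n l : nat)
  (x : 'rV[R]_n) :
  (2 <= n)%N -> (1 <= l)%N -> (l <= n - 1)%N ->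
  (forall i j : 'I_n, (i <= j)%N -> x 0 i <= x 0 j) ->
  (forall i : 'I_n, (i < l)%N -> x 0 i < 0) ->
  (forall i : 'I_n, (l <= i)%N -> 0 <= x 0 i) ->
  let M := x^T *m x in
  (forall i j i' j' : 'I_n, (i < j)%N -> (i' < j')%N ->
     (i, j) != (i', j') -> M i j != M i' j') ->
  forall t : R, 0 <= t <= 1 ->
    [/\ (betti F (Gt M t) 1 <= (l - 1) * (n - l - 1))%N,
        ((forall i j : 'I_n, Gt M t i j = ((i < l)%N (+) (j < l)%N)) ->
           betti F (Gt M t) 1 = ((l - 1) * (n - l - 1))%N)
      & forall k : nat, (1 < k)%N -> betti F (Gt M t) k = 0%N].
Proof.
move=> n2 l1 ln1 mono neg pos M _ t _.
set e := Gt M t.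
have Mij : forall i j, M i j = x 0 i * x 0 j.
  by move=> i j; rewrite /M mxE big_ord1 mxE.
have er_mono : forall i j i' j', M i j <= M i' j' -> (entry_rank M i j <= entry_rank M i' j')%N.
  move=> i j i' j' H; rewrite /entry_rank ltnS; apply: subset_leq_card.
  by apply/subsetP => p; rewrite !inE => /andP[-> h] /=; exact: lt_le_trans h H.
have emono : forall i j i' j', i != j -> e i' j' -> M i j <= M i' j' -> e i j.
  move=> i j i' j' ij /andP[_ h] H; rewrite /e /Gt ij /=; apply: le_trans h.
  by rewrite ler_nat; exact: er_mono.
have esym : forall i j, e i j = e j i.
  move=> i j; rewrite /e /Gt eq_sym; congr (_ && _).
  by rewrite /entry_rank !Mij mulrC.
have ln : (l < n)%N by lia.
have a0n : (l.-1 < n)%N by lia.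
pose a0 := Ordinal a0n; pose b0 := Ordinal ln.
have a0l : (a0 < l)%N by rewrite /= prednK.
have b0l : (l <= b0)%N by [].
have thrA : forall u v : 'I_n, (u < l)%N -> (v < l)%N -> u != v -> e u v -> u != a0 -> e u a0.
  move=> u v ul vl uv euv ua; apply: emono ua euv _.
  have xu := neg u ul; have xv : x 0 v <= x 0 a0 by apply: mono; rewrite /= -ltnS prednK.
  rewrite !Mij; nra.
have thrB : forall u v : 'I_n, (l <= u)%N -> (l <= v)%N -> u != v -> e u v -> u != b0 -> e u b0.
  move=> u v ul vl uv euv ub; apply: emono ub euv _.
  have xu := pos u ul; have xv : x 0 b0 <= x 0 v by apply: mono.
  rewrite !Mij; nra.
have Hcase : (forall p q : 'I_n, p != q -> e p q -> (p < l)%N != (q < l)%N) \/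
             (forall i j : 'I_n, (i < l)%N -> (l <= j)%N -> e i j).
  case: (boolP [exists p, exists q, [&& p != q, e p q & (p < l)%N == (q < l)%N]]).
    move=> /existsP[p /existsP[q /and3P[pq epq /eqP same]]]; right => i j il lj.
    have ij : i != j by apply: contraTneq (leq_trans il lj) => ->; rewrite ltnn.
    apply: emono ij epq _; rewrite !Mij.
    have h1 := neg i il; have h2 := pos j lj.
    have h3 : 0 <= x 0 p * x 0 q.
      case: (ltnP p l) => pl.
        have ql : (q < l)%N by rewrite -same.
        by have := neg p pl; have := neg q ql; nra.
      have ql : (l <= q)%N by rewrite leqNgt -same -leqNgt.
      by have := pos p pl; have := pos q ql; nra.
    nra.
  move=> /existsPn H; left => p q pq epq; apply/negP => /eqP same.
  by move: (H p) => /existsPn /(_ q); rewrite pq epq same eqxx.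
split.
- exact: (part1 F esym a0l b0l thrB Hcase).
- by move=> Heq; apply: (part2 F esym a0l b0l thrB Hcase).
- move=> k k1; exact: (part3 F esym a0l b0l thrA thrB Hcase).
Qed.
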